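(* Let $d\ge 2$ be an integer and $\mathcal{T}=[t_{i_1,\ldots,i_d}]\in\mathrm{Sym}(2,d)\setminus\{0\}$. Assume that $\mathcal{T}$ has a best rank one approximation which is not symmetric. Then for each $i_3,\ldots,i_d\in\{1,2\}$ the $2\times 2$ symmetric matrix $[t_{i,j,i_3,\ldots,i_d}]_{i,j=1}^2$ has trace zero.
   Context: $\mathrm{Sym}(2,d)$ is the space of real tensors $[t_{i_1,\ldots,i_d}]_{i_1,\ldots,i_d=1}^2$ invariant under all permutations of indices. Norm $\|\mathcal{T}\|=\sqrt{\sum t_{i_1,\ldots,i_d}^2}$; $\mathrm{S}^1$ is the unit circle in $\mathbb{R}^2$. A best rank one approximation of $\mathcal{T}$ is a tensor $a\,\mathbf{x}_1\otimes\cdots\otimes\mathbf{x}_d$ ($a\in\mathbb{R}$, $\mathbf{x}_j\in\mathrm{S}^1$) minimizing $\|\mathcal{T}-s\,\mathbf{y}_1\otimes\cdots\otimes\mathbf{y}_d\|$ over $s\in\mathbb{R}$, $\mathbf{y}_j\in\mathrm{S}^1$; it is symmetric if it is a symmetric tensor. *)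

(* Defs.v *)
From mathcomp Require Import all_boot all_order all_algebra all_fingroup.
From mathcomp Require Import reals.
Set Implicit Arguments. Unset Strict Implicit. Unset Printing Implicit Defensive.
Import Order.TTheory GRing.Theory Num.Theory.
Local Open Scope ring_scope.

(* Multi-indices (i_1,...,i_d) with i_k in {1,2} (encoded as 'I_2 = {0,1}). *)
Definition mindex (d : nat) := {ffun 'I_d -> 'I_2}.

Definition tensor (R : realType) (d : nat) := mindex d -> R.

Definition tnorm (R : realType) (d : nat) (T : tensor R d) : R :=
  Num.sqrt (\sum_(i : mindex d) T i ^+ 2).

Definition sym_tensor (R : realType) (d : nat) (T : tensor R d) : Prop :=
  forall (s : 'S_d) (i : mindex d), T [ffun k => i (s k)] = T i.

Definition on_S1 (R : realType) (x : 'I_2 -> R) : Prop :=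
  \sum_(j < 2) x j ^+ 2 = 1.

Definition rank1 (R : realType) (d : nat) (a : R) (xs : 'I_d -> 'I_2 -> R)
  : tensor R d :=
  fun i => a * \prod_(k < d) xs k (i k).

Definition tsub (R : realType) (d : nat) (T U : tensor R d) : tensor R d :=
  fun i => T i - U i.

Definition best_rank1 (R : realType) (d : nat) (T : tensor R d)
  (a : R) (xs : 'I_d -> 'I_2 -> R) : Prop :=
  (forall k, on_S1 (xs k)) /\
  forall (s : R) (ys : 'I_d -> 'I_2 -> R), (forall k, on_S1 (ys k)) ->
    tnorm (tsub T (rank1 a xs)) <= tnorm (tsub T (rank1 s ys)).

(* The multi-index (i, j, i_3, ..., i_d): overwrite the first two slots of idx. *)
Definition idx2 (d : nat) (idx : mindex d) (i j : 'I_2) : mindex d :=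
  [ffun k : 'I_d => if val k == 0%N then i else if val k == 1%N then j else idx k].

(* Main.v *)
Require Import Defs.
From mathcomp Require Import all_boot all_order all_algebra all_fingroup.
From mathcomp Require Import reals.
From mathcomp Require Import lra ring.
Import Order.TTheory GRing.Theory Num.Theory.
Local Open Scope ring_scope.


Section Scalar.
Variable R : realType.

Lemma cs_lemma (s ux uy wx wy : R) : 0 < s -> ux^+2+uy^+2 = 1 -> ux*wx+uy*wy = s ->
  (forall px py : R, px^+2+py^+2 = 1 -> px*wx+py*wy <= s) -> wx = s*ux /\ wy = s*uy.
Proof.
move=> hs hu hv hb.
set t := - uy * wx + ux * wy.
have ht : t = 0.
  set l := t / (2 * s).
  have hl : t = 2 * s * l by rewrite /l; field; lra.
  have hD : 0 < 1 + l^+2 by nra.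
  have hD0 : 1 + l^+2 != 0 by rewrite gt_eqF.
  set px := ((1 - l^+2) * ux - 2 * l * uy) / (1 + l^+2).
  set py := ((1 - l^+2) * uy + 2 * l * ux) / (1 + l^+2).
  have hp : px^+2 + py^+2 = 1.
    have -> : px^+2 + py^+2 = (((1 - l^+2) * ux - 2 * l * uy)^+2 + ((1 - l^+2) * uy + 2 * l * ux)^+2) / (1 + l^+2)^+2.
      by rewrite /px /py; field.
    have -> : ((1 - l^+2) * ux - 2 * l * uy)^+2 + ((1 - l^+2) * uy + 2 * l * ux)^+2 = (1+l^+2)^+2 * (ux^+2+uy^+2) by ring.
    by rewrite hu mulr1 divff // expf_neq0.
  have := hb _ _ hp.
  have -> : px * wx + py * wy = ((1 - l^+2) * (ux*wx+uy*wy) + 2 * l * t) / (1 + l^+2).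
    by rewrite /px /py /t; field.
  rewrite hv ler_pdivrMr // => h.
  nra.
split.
- have e : wx * (ux^+2+uy^+2) = ux*(ux*wx+uy*wy) - uy*t by rewrite /t; ring.
  by rewrite hu hv ht mulr1 in e; rewrite e; ring.
- have e : wy * (ux^+2+uy^+2) = uy*(ux*wx+uy*wy) + ux*t by rewrite /t; ring.
  by rewrite hu hv ht mulr1 in e; rewrite e; ring.
Qed.

Lemma pairA (a b c s ux uy vx vy : R) : 0 < s -> ux^+2+uy^+2 = 1 -> vx^+2+vy^+2 = 1 ->
  (forall px py qx qy : R, px^+2+py^+2 = 1 -> qx^+2+qy^+2 = 1 ->
     px*qx*a + px*qy*b + py*qx*b + py*qy*c <= s) ->
  ux*vx*a + ux*vy*b + uy*vx*b + uy*vy*c = s ->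
  ux*vy - uy*vx != 0 ->
  a + c = 0 /\ a^+2 + b^+2 = s^+2.
Proof.
move=> hs hu hv hb hval hdet.
have [E1 E2] : a*vx + b*vy = s*ux /\ b*vx + c*vy = s*uy.
  apply: cs_lemma => //.
    by rewrite -hval; ring.
  move=> px py hp; have := hb px py vx vy hp hv.
  by have -> : px * (a * vx + b * vy) + py * (b * vx + c * vy) =
     px*vx*a + px*vy*b + py*vx*b + py*vy*c by ring.
have [E3 E4] : a*ux + b*uy = s*vx /\ b*ux + c*uy = s*vy.
  apply: cs_lemma => //.
    by rewrite -hval; ring.
  move=> px py hp; have := hb px py ux uy hp hu.
  by have -> : px * (a * ux + b * uy) + py * (b * ux + c * uy) =
     px*ux*a + px*uy*b + py*ux*b + py*uy*c by ring.
set p1 := ux + vx; set p2 := uy + vy; set q1 := ux - vx; set q2 := uy - vy.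
have e1 : a* p1 + b* p2 - s* p1 = 0 by rewrite /p1 /p2; lra.
have e2 : b* p1 + c* p2 - s* p2 = 0 by rewrite /p1 /p2; lra.
have e3 : a* q1 + b* q2 + s* q1 = 0 by rewrite /q1 /q2; lra.
have e4 : b* q1 + c* q2 + s* q2 = 0 by rewrite /q1 /q2; lra.
have hD : p1* q2 - p2* q1 != 0.
  have -> : p1* q2 - p2* q1 = -2 * (ux*vy - uy*vx) by rewrite /p1/p2/q1/q2; ring.
  by rewrite mulf_neq0 // oppr_eq0 pnatr_eq0.
have hac : a + c = 0.
  have : (a+c)*(p1* q2 - p2* q1) = q2*(a* p1 + b* p2 - s* p1) + p1*(b* q1 + c* q2 + s* q2)
     - p2*(a* q1 + b* q2 + s* q1) - q1*(b* p1 + c* p2 - s* p2) by ring.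
  rewrite e1 e2 e3 e4 !mulr0 !subr0 addr0 => /eqP; rewrite mulf_eq0 (negbTE hD) orbF.
  by move/eqP.
split => //.
have hc : c = - a by lra.
have K1 : (s^+2 - a^+2 - b^+2) * p1 = 0.
  have -> : (s^+2 - a^+2 - b^+2) * p1 = -(a+s)*(a* p1 + b* p2 - s* p1) - b*(b* p1 + c* p2 - s* p2)
    by rewrite hc; ring.
  by rewrite e1 e2; ring.
have K2 : (s^+2 - a^+2 - b^+2) * p2 = 0.
  have -> : (s^+2 - a^+2 - b^+2) * p2 = -b*(a* p1 + b* p2 - s* p1) + (a - s)*(b* p1 + c* p2 - s* p2)
    by rewrite hc; ring.
  by rewrite e1 e2; ring.
apply/eqP; rewrite -subr_eq0; apply/eqP.
move/eqP: K1; rewrite mulf_eq0 => /orP [/eqP K|/eqP P1]; first by lra.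
move/eqP: K2; rewrite mulf_eq0 => /orP [/eqP K|/eqP P2]; first by lra.
by move: hD; rewrite P1 P2 !mul0r subrr eqxx.
Qed.

Lemma ext345 (g0 g1 l0 l1 m0 m1 n0 n1 s : R) : g0^+2 + g1^+2 != 0 ->
  (forall y0 y1 : R, y0^+2+y1^+2 = 1 -> g0*y0 + g1*y1 != 0 ->
     l0*y0 + l1*y1 = 0 /\ (m0*y0+m1*y1)^+2 + (n0*y0+n1*y1)^+2 = s^+2) ->
  forall y0 y1 : R, y0^+2+y1^+2 = 1 ->
     l0*y0 + l1*y1 = 0 /\ (m0*y0+m1*y1)^+2 + (n0*y0+n1*y1)^+2 = s^+2.
Proof.
move=> hg H y0 y1 hy.
have [hgy|hgy] := eqVneq (g0*y0 + g1*y1) 0; last by apply: H.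
have hz : g0*(-y1) + g1*y0 != 0.
  apply/eqP => hz; move: hg; apply/negP; rewrite negbK; apply/eqP.
  have -> : g0^+2+g1^+2 = (g0^+2+g1^+2)*(y0^+2+y1^+2) by rewrite hy mulr1.
  have -> : (g0^+2+g1^+2)*(y0^+2+y1^+2) = (g0*y0+g1*y1)^+2 + (g0*(-y1)+g1*y0)^+2 by ring.
  by rewrite hgy hz; ring.
have P : forall c d : R, c^+2 + d^+2 = 1 -> d != 0 ->
   l0*(c*y0 - d*y1) + l1*(c*y1 + d*y0) = 0 /\
   (m0*(c*y0 - d*y1)+m1*(c*y1 + d*y0))^+2 + (n0*(c*y0 - d*y1)+n1*(c*y1 + d*y0))^+2 = s^+2.
  move=> c d hcd hd; apply: H.
    have -> : (c*y0 - d*y1)^+2 + (c*y1 + d*y0)^+2 = (c^+2+d^+2)*(y0^+2+y1^+2) by ring.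
    by rewrite hcd hy mulr1.
  have -> : g0*(c*y0 - d*y1) + g1*(c*y1 + d*y0) = c*(g0*y0+g1*y1) + d*(g0*(-y1)+g1*y0) by ring.
  by rewrite hgy mulr0 add0r mulf_neq0.
have [L1 Q1] := P (4/5) (3/5) ltac:(lra) ltac:(apply/eqP; lra).
have [L2 Q2] := P (4/5) (-3/5) ltac:(lra) ltac:(apply/eqP; lra).
have [L3 Q3] := P (3/5) (4/5) ltac:(lra) ltac:(apply/eqP; lra).
set A := m0*y0+m1*y1; set B := n0*y0+n1*y1; set A' := m0*(-y1)+m1*y0; set B' := n0*(-y1)+n1*y0.
set X := A^+2+B^+2; set Z := A*A'+B*B'; set W := A'^+2+B'^+2.
have eq : forall c d : R, (m0*(c*y0 - d*y1)+m1*(c*y1 + d*y0))^+2 + (n0*(c*y0 - d*y1)+n1*(c*y1 + d*y0))^+2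
   = c^+2 * X + 2*c*d*Z + d^+2*W.
  by move=> c d; rewrite /X/Z/W/A/B/A'/B'; ring.
rewrite eq in Q1; rewrite eq in Q2; rewrite eq in Q3.
split.
- have e : forall c d : R, l0*(c*y0 - d*y1) + l1*(c*y1 + d*y0) = c*(l0*y0+l1*y1) + d*(l0*(-y1)+l1*y0)
    by move=> c d; ring.
  rewrite e in L1; rewrite e in L2; lra.
- rewrite -/A -/B -/X. lra.
Qed.
End Scalar.


Section Tens.
Variable R : realType.
Variable d : nat.
Variable T : tensor R d.

Definition ev (ys : 'I_d -> 'I_2 -> R) : R :=
  \sum_(j : mindex d) T j * \prod_(k < d) ys k (j k).
Definition upd (ys : 'I_d -> 'I_2 -> R) (m : 'I_d) (v : 'I_2 -> R) :=
  fun k => if k == m then v else ys k.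
Definition e (c : 'I_2) : 'I_2 -> R := fun c' => (c' == c)%:R.

Lemma ord2_cases (c : 'I_2) : c = ord0 \/ c = ord_max.
Proof. case: c => [[|[|n]]] Hc; [left|right|by []]; exact: val_inj. Qed.

Lemma ev_ext ys ys' : (forall k c, ys k c = ys' k c) -> ev ys = ev ys'.
Proof. by move=> H; apply: eq_bigr => j _; congr (_ * _); apply: eq_bigr => k _; rewrite H. Qed.
Arguments ev_ext [ys ys'] _.

Lemma ev_lin ys m v : ev (upd ys m v) =
  v ord0 * ev (upd ys m (e ord0)) + v ord_max * ev (upd ys m (e ord_max)).
Proof.
rewrite /ev !mulr_sumr -big_split; apply: eq_bigr => j _ /=.
rewrite (bigD1 m) //= [X in _ = _ * (_ * X) + _](bigD1 m) //=
   [X in _ = _ + _ * (_ * X)](bigD1 m) //= /upd !eqxx.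
set P := \prod_(k < d | k != m) _.
set P0 := \prod_(k < d | k != m) _.
set P1 := \prod_(k < d | k != m) _.
have -> : P0 = P by apply: eq_bigr => k /negbTE ->.
have -> : P1 = P by apply: eq_bigr => k /negbTE ->.
rewrite /e; case: (ord2_cases (j m)) => ->; rewrite ?eqxx /=.
-
  by rewrite mulr0n; ring.
-
  by rewrite mulr0n; ring.
Qed.

Lemma ev_perm ys (s : 'S_d) : sym_tensor T -> ev (fun k => ys (s k)) = ev ys.
Proof.
move=> hsym; rewrite /ev.
pose h (j : mindex d) : mindex d := [ffun k => j ((s^-1)%g k)].
have hinj : injective h.
  move=> j1 j2 H; apply/ffunP => k.
  by have := congr1 (fun g : mindex d => g (s k)) H; rewrite /h !ffunE permK.
rewrite [RHS](reindex_inj hinj); apply: eq_bigr => j _.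
have -> : T (h j) = T j.
  rewrite -(hsym s (h j)); congr (T _); apply/ffunP => k; by rewrite /h !ffunE permK.
congr (_ * _).
rewrite [RHS](reindex_inj (@perm_inj _ s)); apply: eq_bigr => k _.
by rewrite /h ffunE permK.
Qed.


Lemma upd_comm z p q u v : p != q -> forall k c,
  upd (upd z p u) q v k c = upd (upd z q v) p u k c.
Proof.
move=> hpq k c; rewrite /upd.
case: (eqVneq k q) => [->|hkq]; first by rewrite eq_sym (negbTE hpq).
by case: (eqVneq k p).
Qed.

Definition mat z p q (i j : 'I_2) := ev (upd (upd z p (e i)) q (e j)).

Lemma ev_bil z p q u v : p != q -> ev (upd (upd z p u) q v) =
  u ord0 * v ord0 * mat z p q ord0 ord0 + u ord0 * v ord_max * mat z p q ord0 ord_max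
  + u ord_max * v ord0 * mat z p q ord_max ord0 + u ord_max * v ord_max * mat z p q ord_max ord_max.
Proof.
move=> hpq; have hqp : q != p by rewrite eq_sym.
have H : forall j, ev (upd (upd z p u) q (e j)) = u ord0 * mat z p q ord0 j + u ord_max * mat z p q ord_max j.
  move=> j; rewrite (ev_ext (upd_comm z p q u (e j) hpq)) ev_lin /mat.
  congr (_ * _ + _ * _); apply: ev_ext => k c; exact: upd_comm.
rewrite ev_lin !H; ring.
Qed.

Hypothesis hsym : sym_tensor T.

Lemma mat_sym z p q i j : p != q -> mat z p q i j = mat z p q j i.
Proof.
move=> hpq; have hqp : q != p by rewrite eq_sym.
rewrite /mat -[RHS](ev_perm _ (tperm p q) hsym); apply: ev_ext => k c.
rewrite /upd; case: tpermP => [->|->|/eqP hkp /eqP hkq].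
- by rewrite !eqxx ?(negbTE hpq) ?(negbTE hqp).
- by rewrite !eqxx ?(negbTE hpq) ?(negbTE hqp).
- by rewrite (negbTE hkp) (negbTE hkq).
Qed.

Lemma mat_swap z p q m y i j : p != q -> m != p -> m != q ->
  mat (upd z q y) p m i j = mat (upd z m y) p q i j.
Proof.
move=> hpq hmp hmq.
have hqp : q != p by rewrite eq_sym.
have hpm : p != m by rewrite eq_sym.
have hqm : q != m by rewrite eq_sym.
rewrite /mat -[RHS](ev_perm _ (tperm q m) hsym); apply: ev_ext => k c.
rewrite /upd; case: tpermP => [->|->|/eqP hkq /eqP hkm].
- by rewrite !eqxx ?(negbTE hqp) ?(negbTE hqm) ?(negbTE hmp) ?(negbTE hmq) ?(negbTE hpm) ?(negbTE hpq).
- by rewrite !eqxx ?(negbTE hqp) ?(negbTE hqm) ?(negbTE hmp) ?(negbTE hmq) ?(negbTE hpm) ?(negbTE hpq).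
- by rewrite (negbTE hkq) (negbTE hkm).
Qed.

Lemma mat_lin z p q m y i j : p != q -> m != p -> m != q ->
  mat (upd z m y) p q i j =
  y ord0 * mat (upd z m (e ord0)) p q i j + y ord_max * mat (upd z m (e ord_max)) p q i j.
Proof.
move=> hpq hmp hmq.
have E : forall w k c, upd (upd (upd z m w) p (e i)) q (e j) k c =
                       upd (upd (upd z p (e i)) q (e j)) m w k c.
  move=> w k c; rewrite /upd.
  case: (eqVneq k m) => [->|hkm]; first by rewrite (negbTE hmp) (negbTE hmq).
  by [].
rewrite /mat (ev_ext (E y)) ev_lin (ev_ext (E (e ord0))) (ev_ext (E (e ord_max))).
by [].
Qed.


Definition un (v : 'I_2 -> R) := v ord0 ^+ 2 + v ord_max ^+ 2 = 1.
Definition mkv (x y : R) : 'I_2 -> R := fun c => if c == ord0 then x else y.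
Lemma mkv0 x y : mkv x y ord0 = x. Proof. by []. Qed.
Lemma mkv1 x y : mkv x y ord_max = y. Proof. by []. Qed.

Lemma un_upd z m v : (forall k, un (z k)) -> un v -> forall k, un (upd z m v k).
Proof. by move=> hz hv k; rewrite /upd; case: (k == m). Qed.

Variable sg : R.
Hypothesis hsg : 0 < sg.
Hypothesis hbound : forall ys, (forall k, un (ys k)) -> ev ys <= sg.

Definition good p q z :=
  mat z p q ord0 ord0 + mat z p q ord_max ord_max = 0 /\
  mat z p q ord0 ord0 ^+ 2 + mat z p q ord0 ord_max ^+ 2 = sg ^+ 2.

Lemma pair_good z p q u v : p != q -> (forall k, un (z k)) -> un u -> un v ->
  ev (upd (upd z p u) q v) = sg -> u ord0 * v ord_max - u ord_max * v ord0 != 0 ->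
  good p q z.
Proof.
move=> hpq hz hu hv hval hdet.
apply: (@pairA R _ _ _ sg (u ord0) (u ord_max) (v ord0) (v ord_max)) => //.
- move=> px py qx qy hp hq.
  have := hbound (upd (upd z p (mkv px py)) q (mkv qx qy)) _.
  rewrite ev_bil // (mat_sym z p q ord_max ord0 hpq) => -> //.
  by apply: un_upd => //; apply: un_upd.
- by rewrite -hval ev_bil // (mat_sym z p q ord_max ord0 hpq).
Qed.


Lemma step p q m z y : p != q -> m != p -> m != q -> (forall k, un (z k)) ->
  good p q z -> un y -> good p q (upd z m y).
Proof.
move=> hpq hmp hmq hz [hac hab] hy.
have hpm : p != m by rewrite eq_sym.
have hqm : q != m by rewrite eq_sym.
set a := mat z p q ord0 ord0 in hac hab.
set b := mat z p q ord0 ord_max in hab.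
set c := mat z p q ord_max ord_max in hac.
have hb10 : mat z p q ord_max ord0 = b by rewrite mat_sym.
set zm := z m.
have hzm : un zm by apply: hz.
have hsg0 : sg != 0 by rewrite gt_eqF.
have core : forall Y, un Y ->
   (a * zm ord_max - b * zm ord0) * Y ord0 + (b * zm ord_max + a * zm ord0) * Y ord_max != 0 ->
   good p q (upd z m Y).
  move=> Y hY hg.
  set u := mkv ((a * Y ord0 + b * Y ord_max) / sg) ((b * Y ord0 + c * Y ord_max) / sg).
  have hc : c = - a by lra.
  have hu : un u.
    rewrite /un /u mkv0 mkv1 hc.
    have -> : ((a * Y ord0 + b * Y ord_max) / sg) ^+ 2 + ((b * Y ord0 + - a * Y ord_max) / sg) ^+ 2
       = (a ^+ 2 + b ^+ 2) * (Y ord0 ^+ 2 + Y ord_max ^+ 2) / sg ^+ 2 by field.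
    by rewrite hY hab mulr1 divff // expf_neq0.
  have hval : ev (upd (upd (upd z q Y) p u) m zm) = sg.
    have -> : ev (upd (upd (upd z q Y) p u) m zm) = ev (upd (upd z p u) q Y).
      apply: ev_ext => k c'; rewrite /upd.
      case: (eqVneq k m) => [->|hkm]; first by rewrite (negbTE hmq) (negbTE hmp).
      case: (eqVneq k p) => [->|hkp]; first by rewrite (negbTE hpq).
      by [].
    rewrite ev_bil // hb10 -/a -/b -/c /u mkv0 mkv1 hc.
    have -> : (a * Y ord0 + b * Y ord_max) / sg * Y ord0 * a + (a * Y ord0 + b * Y ord_max) / sg * Y ord_max * b +
      (b * Y ord0 + - a * Y ord_max) / sg * Y ord0 * b + (b * Y ord0 + - a * Y ord_max) / sg * Y ord_max * - a
      = (a ^+ 2 + b ^+ 2) * (Y ord0 ^+ 2 + Y ord_max ^+ 2) / sg by field.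
    by rewrite hY hab mulr1 expr2 mulfK.
  have := @pair_good (upd z q Y) p m u zm hpm (un_upd z q Y hz hY) hu hzm hval.
  move=> /(_ _) [].
    rewrite /u mkv0 mkv1.
    have -> : (a * Y ord0 + b * Y ord_max) / sg * zm ord_max - (b * Y ord0 + c * Y ord_max) / sg * zm ord0
      = ((a * zm ord_max - b * zm ord0) * Y ord0 + (b * zm ord_max + a * zm ord0) * Y ord_max) / sg.
      by rewrite hc; field.
    by rewrite mulf_neq0 // invr_eq0.
  by rewrite /good -!(mat_swap z p q m Y).
have := @ext345 R (a * zm ord_max - b * zm ord0) (b * zm ord_max + a * zm ord0)
  (mat (upd z m (e ord0)) p q ord0 ord0 + mat (upd z m (e ord0)) p q ord_max ord_max)
  (mat (upd z m (e ord_max)) p q ord0 ord0 + mat (upd z m (e ord_max)) p q ord_max ord_max)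
  (mat (upd z m (e ord0)) p q ord0 ord0) (mat (upd z m (e ord_max)) p q ord0 ord0)
  (mat (upd z m (e ord0)) p q ord0 ord_max) (mat (upd z m (e ord_max)) p q ord0 ord_max) sg.
move=> /(_ _ _ (y ord0) (y ord_max) hy).
rewrite /good !(mat_lin z p q m y _ _ hpq hmp hmq).
have lin_eq : forall Y : 'I_2 -> R, forall i j,
  mat (upd z m Y) p q i j = Y ord0 * mat (upd z m (e ord0)) p q i j + Y ord_max * mat (upd z m (e ord_max)) p q i j.
  by move=> Y i j; rewrite mat_lin.
move=> H.
have hg : (a * zm ord_max - b * zm ord0) ^+ 2 + (b * zm ord_max + a * zm ord0) ^+ 2 != 0.
  have -> : (a * zm ord_max - b * zm ord0) ^+ 2 + (b * zm ord_max + a * zm ord0) ^+ 2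
     = (a ^+ 2 + b ^+ 2) * (zm ord0 ^+ 2 + zm ord_max ^+ 2) by ring.
  by rewrite hzm hab mulr1 expf_neq0.
move: (H hg) => /(_ _) [].
  move=> y0 y1 hy01 hg'.
  have := core (mkv y0 y1); rewrite /un mkv0 mkv1 => /(_ hy01 hg') [].
  rewrite !(lin_eq (mkv y0 y1)) !mkv0 !mkv1 => G1 G2; split.
    by rewrite -[RHS]G1; ring.
  by rewrite -G2; congr (_ + _); congr (_ ^+ 2); ring.
move=> H1 H2.
split; last by rewrite -H2; congr (_ + _); congr (_ ^+ 2); ring.
by rewrite -[RHS]H1; ring.
Qed.


Lemma good_ext p q z z' : (forall k, k != p -> k != q -> forall c, z k c = z' k c) ->
  good p q z -> good p q z'.
Proof.
move=> H; have E : forall i j, mat z p q i j = mat z' p q i j.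
  move=> i j; apply: ev_ext => k c; rewrite /upd.
  case: (eqVneq k q) => // hkq; case: (eqVneq k p) => // hkp; exact: H.
by rewrite /good !E.
Qed.

Lemma good_all p q z t : p != q -> (forall k, un (z k)) -> (forall k, un (t k)) ->
  good p q z -> good p q t.
Proof.
move=> hpq hz ht hgz.
pose w n := fun k : 'I_d => if (k < n)%N then t k else z k.
have hwu : forall n k, un (w n k) by move=> n k; rewrite /w; case: ifP.
have H : forall n, good p q (w n).
  elim => [|n IH].
    by apply: good_ext hgz => k _ _ c; rewrite /w ltn0.
  case: (ltnP n d) => hn; last first.
    apply: good_ext IH => k _ _ c; rewrite /w.
    by rewrite ltnS (leq_trans (ltn_ord k) hn) (ltnW (leq_trans (ltn_ord k) hn)).
  set k0 := Ordinal hn.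
  have E : forall k c, upd (w n) k0 (t k0) k c = w n.+1 k c.
    move=> k c; rewrite /upd /w ltnS.
    case: (eqVneq k k0) => [->|hk] /=; first by rewrite leqnn.
    rewrite [(k <= n)%N]leq_eqVlt.
    have -> : (val k == n) = false.
      by apply/negbTE; apply: contra hk => /eqP hk'; apply/eqP/val_inj.
    by [].
  case: (eqVneq k0 p) => [hp|hkp].
    apply: good_ext IH => k hk1 hk2 c; rewrite -E /upd.
    by have -> : (k == k0) = false by apply/negbTE; rewrite hp.
  case: (eqVneq k0 q) => [hq|hkq].
    apply: good_ext IH => k hk1 hk2 c; rewrite -E /upd.
    by have -> : (k == k0) = false by apply/negbTE; rewrite hq.
  have := step p q k0 (w n) (t k0) hpq hkp hkq (hwu n) IH (ht k0).
  by apply: good_ext => k _ _ c; rewrite E.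
apply: good_ext (H d) => k _ _ c; by rewrite /w ltn_ord.
Qed.

End Tens.
Arguments ev {R d} T ys.

Lemma ev_basis (R : realType) d (T : tensor R d) (i : mindex d) : ev T (fun k => e R (i k)) = T i.
Proof.
rewrite /ev (bigD1 i) //=.
have -> : \prod_(k < d) e R (i k) (i k) = 1 by rewrite big1 // => k _; rewrite /e eqxx.
rewrite mulr1 big1 ?addr0 //.
move=> j hji.
have [k hk] : exists k, j k != i k.
  apply/existsP; apply: contraR hji; rewrite negb_exists => /forallP H.
  by apply/eqP/ffunP => k; apply/eqP; move: (H k); rewrite negbK.
by rewrite (bigD1 k) //= /e (negbTE hk) !mul0r mulr0.
Qed.

Lemma sum_sq (R : realType) d (T : tensor R d) s ys : (forall k, on_S1 (ys k)) ->
  \sum_(j : mindex d) (tsub T (rank1 s ys) j) ^+ 2 =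
  \sum_(j : mindex d) T j ^+ 2 - 2 * s * ev T ys + s ^+ 2.
Proof.
move=> hys.
have P1 : \sum_(j : mindex d) (\prod_(k < d) ys k (j k)) ^+ 2 = 1.
  under eq_bigr => j _ do rewrite -prodrXl.
  rewrite -(bigA_distr_bigA (fun k c => ys k c ^+ 2)) /=.
  by rewrite big1 // => k _; apply: hys.
rewrite /tsub /rank1 /ev.
have E : forall j : mindex d, (T j - s * \prod_(k < d) ys k (j k)) ^+ 2 = T j ^+ 2 - (2 * s) * (T j * \prod_(k < d) ys k (j k)) + s ^+ 2 * (\prod_(k < d) ys k (j k)) ^+ 2.
  by move=> j; ring.
rewrite (eq_bigr _ (fun j _ => E j)).
rewrite big_split sumrB /= -mulr_sumr -mulr_sumr P1 mulr1.
by [].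
Qed.


Lemma onS1_eq (R : realType) (v : 'I_2 -> R) : \sum_(j < 2) v j ^+ 2 = v ord0 ^+ 2 + v ord_max ^+ 2.
Proof.
rewrite !big_ord_recl big_ord0 addr0.
by have -> : lift ord0 (ord0 : 'I_1) = ord_max :> 'I_2 by apply/val_inj.
Qed.
Lemma onS1_un (R : realType) (v : 'I_2 -> R) : on_S1 v -> un R v.
Proof. by rewrite /on_S1 onS1_eq. Qed.
Lemma un_onS1 (R : realType) (v : 'I_2 -> R) : un R v -> on_S1 v.
Proof. by rewrite /on_S1 onS1_eq. Qed.

Theorem lemma5p1 (R : realType) (d : nat) (T : tensor R d) :
  (2 <= d)%N ->
  sym_tensor T ->
  (exists i : mindex d, T i != 0) ->
  (exists (a : R) (xs : 'I_d -> 'I_2 -> R),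
      best_rank1 T a xs /\ ~ sym_tensor (rank1 a xs)) ->
  forall idx : mindex d,
    T (idx2 idx ord0 ord0) + T (idx2 idx ord_max ord_max) = 0.
Proof.
move=> hd hsym _ [a [xs [[hxs hbest] hns]]] idx.
set N := \sum_(j : mindex d) T j ^+ 2.
have key : forall s ys, (forall k, on_S1 (ys k)) ->
    N - 2 * a * ev T xs + a ^+ 2 <= N - 2 * s * ev T ys + s ^+ 2.
  move=> s ys hys; have := hbest s ys hys.
  rewrite /tnorm ler_sqrt; last by apply: sumr_ge0 => j _; apply: sqr_ge0.
  by rewrite !sum_sq.
have ha : a = ev T xs.
  have := key (ev T xs) xs hxs => h; nra.
have ha0 : a != 0.
  apply/eqP => a0; apply: hns => s i; by rewrite /rank1 a0 !mul0r.
have [eps [he1 he2]] : exists eps : R, eps ^+ 2 = 1 /\ eps * a = `|a|.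
  case: (boolP (0 <= a)) => h.
    by exists 1; rewrite expr1n mul1r ger0_norm.
  exists (-1); rewrite sqrrN expr1n ltr0_norm ?mulN1r //.
  by move: h; rewrite -ltNge.
have hsg : 0 < `|a| by rewrite normr_gt0.
have hb : forall ys, (forall k, un R (ys k)) -> ev T ys <= `|a|.
  move=> ys hys.
  have := key (ev T ys) ys (fun k => @un_onS1 R _ (hys k)) => h.
  rewrite -he2; nra.
pose o0 : 'I_d := Ordinal (leq_trans (isT : (0 < 2)%N) hd).
pose o1 : 'I_d := Ordinal hd.
have ho01 : o0 != o1 by [].
have hxu : forall k, un R (xs k) by move=> k; apply: onS1_un.
have [l hl0 hdet] : exists2 l : 'I_d, l != o0 &
    xs o0 ord0 * xs l ord_max - xs o0 ord_max * xs l ord0 != 0.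
  case: (boolP [exists l : 'I_d, (l != o0) &&
      (xs o0 ord0 * xs l ord_max - xs o0 ord_max * xs l ord0 != 0)]).
    by move=> /existsP [l /andP [h1 h2]]; exists l.
  move=> hno; exfalso; apply: hns.
  have hdet0 : forall l, xs o0 ord0 * xs l ord_max - xs o0 ord_max * xs l ord0 = 0.
    move=> l; case: (eqVneq l o0) => [->|hl]; first by ring.
    move: hno; rewrite negb_exists => /forallP /(_ l); rewrite hl /=.
    by move/negPn/eqP.
  pose kap l := xs o0 ord0 * xs l ord0 + xs o0 ord_max * xs l ord_max.
  have hpar : forall l c, xs l c = kap l * xs o0 c.
    move=> l c; have hu := hxu o0; have h := hdet0 l; rewrite /un in hu.
    rewrite /kap; apply/esym/eqP; rewrite -subr_eq0; apply/eqP.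
    case: (ord2_cases c) => ->.
    + have -> : (xs o0 ord0 * xs l ord0 + xs o0 ord_max * xs l ord_max) * xs o0 ord0 - xs l ord0
        = xs l ord0 * (xs o0 ord0 ^+ 2 + xs o0 ord_max ^+ 2 - 1)
          + xs o0 ord_max * (xs o0 ord0 * xs l ord_max - xs o0 ord_max * xs l ord0) by ring.
      by rewrite hu h subrr; ring.
    + have -> : (xs o0 ord0 * xs l ord0 + xs o0 ord_max * xs l ord_max) * xs o0 ord_max - xs l ord_max
        = xs l ord_max * (xs o0 ord0 ^+ 2 + xs o0 ord_max ^+ 2 - 1)
          - xs o0 ord0 * (xs o0 ord0 * xs l ord_max - xs o0 ord_max * xs l ord0) by ring.
      by rewrite hu h subrr; ring.
  have E : forall j : mindex d, \prod_(k < d) xs k (j k) =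
      (\prod_(k < d) kap k) * \prod_(k < d) xs o0 (j k).
    by move=> j; rewrite -big_split; apply: eq_bigr => k _; apply: hpar.
  move=> s i; rewrite /rank1 !E; congr (_ * (_ * _)).
  rewrite [RHS](reindex_inj (@perm_inj _ s)); apply: eq_bigr => k _.
  by rewrite ffunE.
pose xs' := fun k => xs (tperm o1 l k).
have hx'0 : xs' o0 = xs o0.
  by rewrite /xs' tpermD // eq_sym.
have hx'1 : xs' o1 = xs l by rewrite /xs' tpermL.
have hx'u : forall k, un R (xs' k) by move=> k; apply: hxu.
pose u := mkv R (eps * xs o0 ord0) (eps * xs o0 ord_max).
have hgood0 : good R d T `|a| o0 o1 xs'.
  apply: (@pair_good R d T hsym `|a| hsg hb xs' o0 o1 u (xs l) ho01 hx'u).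
  - rewrite /un /u mkv0 mkv1 !exprMn he1 !mul1r; exact: hxu.
  - exact: hxu.
  - have -> : ev T (upd R d (upd R d xs' o0 u) o1 (xs l)) =
       eps * ev T (upd R d (upd R d xs' o0 (xs o0)) o1 (xs l)).
      by rewrite !ev_bil // /u mkv0 mkv1; ring.
    rewrite -he2 ha; congr (_ * _).
    rewrite -(@ev_perm R d T (fun k => xs k) (tperm o1 l) hsym).
    apply: ev_ext => k c; rewrite /upd.
    case: (eqVneq k o1) => [->|hk1]; first by rewrite tpermL.
    case: (eqVneq k o0) => [->|hk0]; first by rewrite tpermD // eq_sym.
    by [].
  - rewrite /u mkv0 mkv1.
    have -> : eps * xs o0 ord0 * xs l ord_max - eps * xs o0 ord_max * xs l ord0 =
      eps * (xs o0 ord0 * xs l ord_max - xs o0 ord_max * xs l ord0) by ring.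
    rewrite mulf_neq0 //; apply/eqP => e0; move: he1; rewrite e0 expr0n /=.
    by move/eqP; rewrite eq_sym oner_eq0.
pose t := fun k => e R (idx k).
have htu : forall k, un R (t k).
  move=> k; rewrite /un /t /e; case: (ord2_cases (idx k)) => ->; rewrite !eqxx //=.
  - by rewrite expr1n expr0n addr0.
  - by rewrite expr1n expr0n add0r.
have [G _] := @good_all R d T hsym `|a| hsg hb o0 o1 xs' t ho01 hx'u htu hgood0.
have M : forall c, mat R d T t o0 o1 c c = T (idx2 idx c c).
  move=> c; rewrite /mat -ev_basis; apply: ev_ext => k c'.
  rewrite /upd /idx2 ffunE /t.
  have -> : (k == o1) = (val k == 1%N) by [].
  have -> : (k == o0) = (val k == 0%N) by [].
  by case: (val k) => [|[|n]].
by rewrite -!M.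
Qed.
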